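(* Let $p$ be prime and $H\le\mathrm{S}_n$ be in $\mathfrak{InP}(\mathrm{C}_p)$ with $|H|=p^s$, and let $M\in\mathrm{M}(s,k,p)$ be a generator matrix of $\gamma(H)$ in standard form. Fix $m\in\{s,s+1,\dots,k-1\}$ and let $J=\{1,2,\dots,m\}\,\dot\cup\,\{u\}\subseteq\{1,\dots,k\}$. Let $f:J\to\{1,\dots,k\}$ be an injection. If there exists $i\in\{1,\dots,s\}$ such that $M_{i,f(u)}\ne0$ and $M_{i,f(j)}M_{j,u}=0$ for all $j\in J\cap\{1,\dots,s\}$, then there is no $\nu\in N_{\mathrm{S}_n}(H)$ with $\Omega_j^\nu=\Omega_{f(j)}$ for all $j\in J$.
   Context: $H\le\mathrm{S}_{n}$, $n=pk$, has orbits $\Omega_1,\dots,\Omega_k$ of size $p$ with each $G_i:=H|_{\Omega_i}$ cyclic of order $p$, ordered so that $|H|_{\Omega_1\cup\dots\cup\Omega_s}|=p^s$. $G=G_1\times\dots\times G_k$, $g_1$ generates $G_1$, $g_i$ is the conjugate of $g_1$ by the involution interchanging $\Omega_1$ and $\Omega_i$ via a bijection witnessing a permutation isomorphism $G_1\to G_i$, and $\gamma:G\to\mathbb{F}_p^k$ is $\gamma(g_1^{r_1}\cdots g_k^{r_k})=(r_1,\dots,r_k)$. $M_{i,j}$ denotes the $(i,j)$ entry; standard form means the first $s$ columns of $M$ form the identity $I_s$; the rows of $M$ form a basis of $\gamma(H)$. *)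

(* Defs.v *)
From mathcomp Require Import all_boot all_order all_algebra all_fingroup all_solvable.
Set Implicit Arguments. Unset Strict Implicit. Unset Printing Implicit Defensive.
Import GRing.Theory.
Local Open Scope group_scope.

Definition restrG (n : nat) (H : {group {perm 'I_n}}) (Om : {set 'I_n}) :=
  restr_perm Om @* H.

Definition in_gammaH (p n k : nat) (g : 'I_k -> {perm 'I_n})
    (H : {group {perm 'I_n}}) (r : 'rV['F_p]_k) : Prop :=
  (\prod_(i < k) g i ^+ (nat_of_ord (r ord0 i))) \in H.

(* Main.v *)
Require Import Defs.
From mathcomp Require Import all_boot all_order all_algebra all_fingroup all_solvable.
Import GRing.Theory.

Lemma prod_fix (n k : nat) (Om : 'I_k -> {set 'I_n}) (h : 'I_k -> {perm 'I_n})
  (z : 'I_n) :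
  (forall j, perm_on (Om j) (h j)) ->
  forall r : seq 'I_k, (forall j, j \in r -> z \notin Om j) ->
  (\prod_(j <- r) h j)%g z = z.
Proof.
move=> hon; elim=> [|a r IH] hr; first by rewrite big_nil perm1.
rewrite big_cons permM (out_perm (hon a)); last by apply: hr; rewrite in_cons eqxx.
by apply: IH => j jr; apply: hr; rewrite in_cons jr orbT.
Qed.

Lemma prod_apply_gen (n k : nat) (Om : 'I_k -> {set 'I_n}) (h : 'I_k -> {perm 'I_n})
  (t : 'I_k) (y : 'I_n) :
  (forall a b z, z \in Om a -> z \in Om b -> a = b) ->
  (forall j, perm_on (Om j) (h j)) ->
  y \in Om t ->
  forall r : seq 'I_k, uniq r ->
  (\prod_(j <- r) h j)%g y = if t \in r then h t y else y.
Proof.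
move=> Od hon yt; elim=> [|a r IH] /=; first by rewrite big_nil perm1.
case/andP=> ar ur; rewrite big_cons permM in_cons.
have [eta|nat] := eqVneq t a.
  subst t => /=.
  have ht : h a y \in Om a by rewrite (perm_closed _ (hon a)).
  apply: prod_fix => // j jr; apply/negP => hj.
  have := Od _ _ _ ht hj => eaj; by rewrite eaj jr in ar.
rewrite /= (out_perm (hon a)); first exact: IH.
apply/negP=> ya; have := Od _ _ _ yt ya => eta; by rewrite eta eqxx in nat.
Qed.

Lemma prod_apply (n k : nat) (Om : 'I_k -> {set 'I_n}) (h : 'I_k -> {perm 'I_n})
  (t : 'I_k) (y : 'I_n) :
  (forall a b z, z \in Om a -> z \in Om b -> a = b) ->
  (forall j, perm_on (Om j) (h j)) ->
  y \in Om t ->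
  (\prod_(j < k) h j)%g y = h t y.
Proof.
move=> Od hon yt.
have := @prod_apply_gen n k Om h t y Od hon yt _ (index_enum_uniq 'I_k).
by rewrite mem_index_enum.
Qed.

Theorem lemma5p5 (p n k s m : nat) (H : {group {perm 'I_n}})
  (Om : 'I_k -> {set 'I_n}) (g : 'I_k -> {perm 'I_n})
  (M : 'M['F_p]_(s, k)) (u : 'I_k) (f : 'I_k -> 'I_k) :
  prime p ->
  n = (p * k)%N ->
  (* Om_1, ..., Om_k are exactly the H-orbits, pairwise distinct, of size p *)
  injective Om ->
  (forall x : 'I_n, exists i, x \in Om i) ->
  (forall (i : 'I_k) (x : 'I_n), x \in Om i -> orbit 'P H x = Om i) ->
  (forall i, #|Om i| = p) ->
  (* each G_i = H|_{Om_i} is cyclic of order p *)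
  (forall i, cyclic (restrG H (Om i)) /\ #|restrG H (Om i)| = p) ->
  (* ordering: |H|_{Om_1 u ... u Om_s}| = p^s, and |H| = p^s *)
  #|restrG H (\bigcup_(i : 'I_k | (i < s)%N) Om i)| = (p ^ s)%N ->
  #|H| = (p ^ s)%N ->
  (* g_1 generates G_1 *)
  (forall i : 'I_k, val i = 0%N -> <[g i]>%g = restrG H (Om i)) ->
  (* g_j is the conjugate of g_1 by an involution interchanging Om_1 and Om_j
     via a bijection witnessing a permutation isomorphism G_1 -> G_j *)
  (forall i j : 'I_k, val i = 0%N -> val j != 0%N ->
     exists sigma : {perm 'I_n},
       [/\ (sigma * sigma = 1)%g,
           sigma @: Om i = Om j,
           (forall x, x \notin Om i :|: Om j -> sigma x = x),
           (restrG H (Om i) :^ sigma)%g = restrG H (Om j)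
         & g j = (g i ^ sigma)%g]) ->
  (* the rows of M form a basis of gamma(H) *)
  row_free M ->
  (forall v : 'rV['F_p]_k, (v <= M)%MS <-> in_gammaH g H v) ->
  (* standard form: the first s columns of M form I_s *)
  (forall (i : 'I_s) (j : 'I_k), (val j < s)%N -> M i j = ((val i == val j)%:R)%R) ->
  (* m in {s, ..., k-1}, J = {1..m} disjoint-union {u}, f injective on J *)
  (s <= m)%N -> (m < k)%N -> (m <= val u)%N ->
  {in [set j : 'I_k | (val j < m)%N || (j == u)] &, injective f} ->
  (exists i : 'I_s,
     M i (f u) != 0%R /\
     (forall (j : 'I_k) (r : 'I_s), val r = val j -> (M i (f j) * M r u = 0)%R)) ->
  ~ (exists2 nu : {perm 'I_n}, nu \in 'N(H)%g &
       forall j : 'I_k, ((val j < m)%N || (j == u)) -> nu @: Om j = Om (f j)).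
Proof.
move=> pr_p nE Oinj Ocov Oorb Ocard Gcyc Cs CH g0 gconj Mfree Mgam Mstd sm mk mu
  finj [i0 [Mi0 Mcond]] [nu nuN nuJ].
pose o : 'I_k := Ordinal (leq_ltn_trans (leq0n _) (ltn_ord u)).
have gcyc : forall j, <[g j]>%g = restrG H (Om j).
  move=> j; case: (eqVneq (val j) 0%N) => [j0|jn0]; first exact: g0.
  have [σ [_ _ _ Hσ ->]] := gconj o j erefl jn0.
  by rewrite cycleJ (g0 o erefl) Hσ.
have gon : forall j e, perm_on (Om j) (g j ^+ e)%g.
  move=> j e; have : (g j ^+ e)%g \in restrG H (Om j) by rewrite -gcyc mem_cycle.
  by rewrite /restrG => /morphimP [a _ _ ->]; apply: restr_perm_on.
have gord : forall j, #[g j]%g = p.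
  by move=> j; rewrite /order gcyc; case: (Gcyc j).
have Odisj : forall a b y, y \in Om a -> y \in Om b -> a = b.
  move=> a b y ya yb; apply: Oinj; by rewrite -(Oorb a y ya) -(Oorb b y yb).
have HN : forall x j, x \in H -> x \in ('N(Om j | 'P))%g.
  move=> x j xH; apply/astabsP => y /=; rewrite /aperm.
  apply/idP/idP => [xy|yj].
    rewrite -(Oorb j _ xy); apply/orbitP; exists x^-1%g; first exact: groupVr.
    by rewrite /= /aperm permK.
  by rewrite -(Oorb j y yj); apply/orbitP; exists x.
have coef : forall x, x \in H -> forall j, exists c : 'F_p,
    forall y, y \in Om j -> x y = (g j ^+ c)%g y.
  move=> x xH j.
  have : restr_perm (Om j) x \in <[g j]>%g by rewrite gcyc mem_morphim // HN.
  case/cycleP => e he; exists (inZp e) => y yj.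
  rewrite -(restr_permE (HN _ _ xH) yj) he -expg_mod_order gord /= Fp_cast //.
have zero : forall j (c : 'F_p), (forall y, y \in Om j -> (g j ^+ c)%g y = y) -> c = 0%R.
  move=> j c fx; have : (g j ^+ c)%g = 1%g.
    apply/permP => y; rewrite perm1; case: (boolP (y \in Om j)) => [/fx // | yn].
    exact: out_perm (gon j c) yn.
  have cp : (c < p)%N by move: (ltn_ord c); rewrite [X in (_ < X)%N -> _]Fp_cast.
  move/eqP; rewrite -order_dvdn gord /dvdn modn_small // => /eqP c0.
  by apply: val_inj.
have decomp : forall x, x \in H -> exists v : 'rV['F_p]_k, (v <= M)%MS /\
    forall j y, y \in Om j -> x y = (g j ^+ v ord0 j)%g y.
  move=> x xH; have /fin_all_exists [c hc] := coef x xH.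
  exists (\row_j c j)%R; split; last by move=> j y yj; rewrite mxE; apply: hc.
  apply/Mgam; rewrite /in_gammaH.
  suff -> : (\prod_(i < k) g i ^+ (\row_j c j)%R ord0 i)%g = x by [].
  apply/permP => y; have [t yt] := Ocov y.
  rewrite (@prod_apply n k Om _ t y Odisj) ?mxE; [by rewrite (hc t y yt) | | by []].
  by move=> j; apply: gon.
have sk : (s <= k)%N by apply: leq_trans sm (ltnW mk).
pose h := (\prod_(j < k) g j ^+ (row i0 M) ord0 j)%g.
have hH : h \in H by apply/Mgam; exact: row_sub.
have hy : forall t y, y \in Om t -> h y = (g t ^+ M i0 t)%g y.
  move=> t y yt; rewrite /h (@prod_apply n k Om _ t y Odisj) //; first by rewrite mxE.
pose x := (h ^ nu^-1)%g.
have xH : x \in H by rewrite /x memJ_norm // groupV.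
have xE : forall y, x y = nu^-1%g (h (nu y)).
  by move=> y; rewrite /x /conjg invgK !permM.
have numap : forall j y, ((val j < m)%N || (j == u)) -> y \in Om j -> nu y \in Om (f j).
  by move=> j y hj yj; rewrite -nuJ // imset_f.
have fix1 : forall j, ((val j < m)%N || (j == u)) ->
    (forall z, z \in Om (f j) -> h z = z) -> forall y, y \in Om j -> x y = y.
  by move=> j hj hf y yj; rewrite xE hf ?permK // numap.
have fix2 : forall j, ((val j < m)%N || (j == u)) ->
    (forall y, y \in Om j -> x y = y) -> forall z, z \in Om (f j) -> h z = z.
  move=> j hj hf z; rewrite -nuJ // => /imsetP [y yj ->].
  have := hf y yj; rewrite xE => e.
  by rewrite -{2}e permKV.
have [v [vM hv]] := decomp x xH.
have [a va] := submxP vM.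
have vcoord : forall l : 'I_s, v ord0 (widen_ord sk l) = a ord0 l.
  move=> l; rewrite va mxE (bigD1 l) //= Mstd //= eqxx mulr1 big1 ?addr0 //.
  move=> l' nl; rewrite Mstd //=.
  by rewrite (inj_eq val_inj) (negbTE nl) mulr0.
have vu : v ord0 u = 0%R.
  rewrite va mxE big1 // => l _.
  have Jl : (val (widen_ord sk l) < m)%N by apply: leq_trans (ltn_ord l) sm.
  have [Mz|Mnz] := eqVneq (M i0 (f (widen_ord sk l))) 0%R.
    suff : v ord0 (widen_ord sk l) = 0%R by rewrite vcoord => ->; rewrite mul0r.
    apply: (zero (widen_ord sk l)) => y yl.
    rewrite -hv //; apply: (fix1 _ _ _ y yl); first by rewrite Jl.
    by move=> z zf; rewrite (hy _ _ zf) Mz expg0 perm1.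
  have := Mcond (widen_ord sk l) l erefl.
  by move/eqP; rewrite mulf_eq0 (negbTE Mnz) /= => /eqP ->; rewrite mulr0.
have Ju : ((val u < m)%N || (u == u)) by rewrite eqxx orbT.
have xu : forall y, y \in Om u -> x y = y by move=> y yu; rewrite (hv _ _ yu) vu expg0 perm1.
have hu := fix2 u Ju xu.
have := zero (f u) (M i0 (f u)) (fun z zf => etrans (esym (hy _ _ zf)) (hu z zf)).
by move/eqP; rewrite (negbTE Mi0).
Qed.
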